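(* Let $Q_1=(U,R_1)$ be an interval order and $Q_2=(U,R_2)$ a partial order on the same finite set $U$, such that $Q_1$ and $Q_2$ do not contradict each other. Then there exists a linear order $Q_0$ on $U$ that is a linear extension of both $Q_1$ and $Q_2$.
   Context: An interval order is a partial order whose elements $x$ can be assigned real intervals $I_x$ such that $x<y$ iff $I_x$ lies entirely to the left of $I_y$. Two partial orders $Q_1,Q_2$ on $U$ contradict each other if there are $u,v\in U$ with $u<_{Q_1}v$ and $v<_{Q_2}u$. A linear order $Q_0$ is a linear extension of $Q$ if $u<_Q v$ implies $u<_{Q_0}v$. *)

(* Defs.v *)
From mathcomp Require Import all_boot.
From Stdlib Require Import Reals.
Set Implicit Arguments. Unset Strict Implicit. Unset Printing Implicit Defensive.

Definition strict_partial_order (U : Type) (R : U -> U -> Prop) : Prop :=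
  (forall u, ~ R u u) /\ (forall u v w, R u v -> R v w -> R u w).

Definition linear_order (U : Type) (R : U -> U -> Prop) : Prop :=
  strict_partial_order R /\ (forall u v, u <> v -> R u v \/ R v u).

(* Interval order: each x gets a closed real interval [l x, r x] (l x <= r x),
   and x < y iff I_x lies entirely to the left of I_y, i.e. r x < l y. *)
Definition interval_order (U : Type) (R : U -> U -> Prop) : Prop :=
  strict_partial_order R /\
  exists (l r : U -> Rdefinitions.R),
    (forall x, Rle (l x) (r x)) /\
    (forall x y, R x y <-> Rlt (r x) (l y)).

Definition contradict (U : Type) (R1 R2 : U -> U -> Prop) : Prop :=
  exists u v, R1 u v /\ R2 v u.

Definition linear_extension (U : Type) (R0 R : U -> U -> Prop) : Prop :=
  linear_order R0 /\ (forall u v, R u v -> R0 u v).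

(* Main.v *)
Require Import Defs.
From mathcomp Require Import all_boot.
From mathcomp Require Import boolp.
From mathcomp Require Import zify.
From Stdlib Require Import Reals Lra.
Set Implicit Arguments. Unset Strict Implicit.

Definition R2e (U : Type) (R2 : U -> U -> Prop) x y := x = y \/ R2 x y.
Definition TT (U : Type) (R1 R2 : U -> U -> Prop) x y :=
  exists p q, R2e R2 x p /\ (p = q \/ R1 p q) /\ R2e R2 q y.

Lemma R2e_trans (U : Type) (R2 : U -> U -> Prop) x y z :
  strict_partial_order R2 -> R2e R2 x y -> R2e R2 y z -> R2e R2 x z.
Proof.
move=> [_ Ht] [->|h1] [<-|h2]; rewrite /R2e; auto.
right; exact: Ht h1 h2.
Qed.

Lemma noc (U : Type) (R1 R2 : U -> U -> Prop) a b :
  ~ contradict R1 R2 -> strict_partial_order R1 -> R1 a b -> R2e R2 b a -> False.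
Proof.
move=> H [Hi _] h [e|h2]; first by subst; exact: Hi h.
apply: H; exists a, b; auto.
Qed.

Lemma twotwo (U : Type) (R1 : U -> U -> Prop) a b c d :
  interval_order R1 -> R1 a b -> R1 c d -> R1 a d \/ R1 c b.
Proof.
move=> [_ [l [r [_ Hr]]]]; rewrite !Hr => h1 h2.
destruct (Rlt_dec (r a) (l d)); [left|right]; lra.
Qed.

Lemma TT_trans (U : Type) (R1 R2 : U -> U -> Prop) x y z :
  interval_order R1 -> strict_partial_order R2 -> ~ contradict R1 R2 ->
  TT R1 R2 x y -> TT R1 R2 y z -> TT R1 R2 x z.
Proof.
move=> HI H2 Hn [p [q [h1 [h2 h3]]]] [p' [q' [h1' [h2' h3']]]].
have hqp : R2e R2 q p' by apply: R2e_trans h3 h1'.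
case: h2 => [e|r1].
  subst q; exists p', q'; split; [exact: R2e_trans h1 hqp|auto].
case: h2' => [e|r1'].
  subst q'; exists p, q; split; [exact h1|split; [auto|exact: R2e_trans hqp h3']].
case: (twotwo HI r1 r1') => r.
  by exists p, q'; auto.
exfalso; exact: (noc Hn (proj1 HI) r hqp).
Qed.

Lemma LL (U : Type) (R1 R2 : U -> U -> Prop) p q :
  interval_order R1 -> strict_partial_order R2 -> ~ contradict R1 R2 ->
  R1 p q -> TT R1 R2 q p -> False.
Proof.
move=> HI H2 Hn h [a [b [h1 [h2 h3]]]].
have S1 := proj1 HI.
case: h2 => [e|r].
  subst b; exact: (noc Hn S1 h (R2e_trans H2 h1 h3)).
case: (twotwo HI h r) => r'.
  exact: (noc Hn S1 r' h3).
exact: (noc Hn S1 r' h1).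
Qed.

Lemma TT_refl (U : Type) (R1 R2 : U -> U -> Prop) x : TT R1 R2 x x.
Proof. exists x, x; rewrite /R2e; auto. Qed.

Lemma TT_anti (U : Type) (R1 R2 : U -> U -> Prop) x y :
  interval_order R1 -> strict_partial_order R2 -> ~ contradict R1 R2 ->
  TT R1 R2 x y -> TT R1 R2 y x -> x = y.
Proof.
move=> HI H2 Hn Hxy Hyx.
have Hxy' := Hxy; have Hyx' := Hyx.
move: Hxy' Hyx' => [p [q [h1 [h2 h3]]]] [p' [q' [h1' [h2' h3']]]].
case: h2 => [e|r].
  case: h2' => [e'|r'].
    subst q q'.
    have a1 := R2e_trans H2 h1 h3; have a2 := R2e_trans H2 h1' h3'.
    case: a1 => [//|b1]; case: a2 => [e2|b2]; first by [].
    by exfalso; exact: (proj1 H2 x (proj2 H2 _ _ _ b1 b2)).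
  exfalso; apply: (LL HI H2 Hn r').
  apply: (TT_trans HI H2 Hn (y := x)); first by exists x, x; rewrite /R2e; auto.
  apply: (TT_trans HI H2 Hn (y := y)); first exact Hxy.
  by exists p', p'; rewrite /R2e; auto.
exfalso; apply: (LL HI H2 Hn r).
apply: (TT_trans HI H2 Hn (y := y)); first by exists y, y; rewrite /R2e; auto.
apply: (TT_trans HI H2 Hn (y := x)); first exact Hyx.
by exists p, p; rewrite /R2e; auto.
Qed.

Lemma lin_ext (U : finType) (S : U -> U -> Prop) :
  strict_partial_order S -> exists R0, linear_order R0 /\ (forall u v, S u v -> R0 u v).
Proof.
move=> [Hi Ht].
pose pr x := [set y | `[< S y x >]].
pose rk x := #|pr x|.
have Hrk : forall x y, S x y -> (rk x < rk y)%N.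
  move=> x y h; apply: proper_card; apply/properP; split.
    apply/subsetP => z; rewrite !inE => /asboolP hz; apply/asboolP; exact: Ht hz h.
  exists x; rewrite inE; first by apply/asboolP.
  by apply/negP => /asboolP /Hi.
exists (fun x y => (rk x < rk y)%N \/ (rk x = rk y /\ (enum_rank x < enum_rank y)%N)).
split; last by move=> u v h; left; exact: Hrk.
split; first split.
- move=> u; lia.
- move=> u v w; lia.
- move=> u v ne.
  have : enum_rank u <> enum_rank v by move=> /enum_rank_inj.
  move=> ne'.
  have : (nat_of_ord (enum_rank u)) <> (nat_of_ord (enum_rank v)) by move=> /val_inj.
  lia.
Qed.

Theorem lemma10 (U : finType) (R1 R2 : U -> U -> Prop) :
  interval_order R1 -> strict_partial_order R2 -> ~ contradict R1 R2 ->
  exists R0 : U -> U -> Prop, linear_extension R0 R1 /\ linear_extension R0 R2.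
Proof.
move=> HI H2 Hn.
have S1 := proj1 HI.
pose St x y := TT R1 R2 x y /\ x <> y.
have HS : strict_partial_order St.
  split; first by move=> u [_ []].
  move=> u v w [h1 n1] [h2 n2]; split; first exact: TT_trans HI H2 Hn h1 h2.
  move=> e; subst w; apply: n1; exact: TT_anti HI H2 Hn h1 h2.
have [R0 [HL HE]] := lin_ext HS.
exists R0; split; split=> // u v h; apply: HE; split.
- by exists u, v; rewrite /R2e; auto.
- by move=> e; subst v; exact: (proj1 S1 u h).
- by exists v, v; rewrite /R2e; auto.
- by move=> e; subst v; exact: (proj1 H2 u h).
Qed.
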